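(* Let $t,t'\in B_n$ with $t\neq t'$ and let $G$ be a digraph such that $\mathbb{A}(G)$ satisfies $t\approx t'$. Then $O_G\le Y_{t,t'}+1$.
   Context: Digraphs $G=(V,E)$ have $E\subseteq V\times V$, loops allowed, possibly infinite. $\mathbb{A}(G)$ is the groupoid on $V\cup\{\infty\}$ with $xy=x$ if $x,y\in V$, $(x,y)\in E$, and $xy=\infty$ otherwise. $B_n$: binary terms with $x_1,\dots,x_n$ each occurring once in this order; $G(t)$: rooted tree defined by $G(x_i)$ a single vertex and $G(t_1t_2)=G(t_1)\cup G(t_2)$ plus an edge from the leftmost variable of $t_1$ to that of $t_2$; root $x_1$. For a rooted tree $T$, $T_x$ is the rooted induced subtree of $x$ and its descendants, $h$ denotes height. With $T=G(t)$, $T'=G(t')$: $Y_{t,t'}$ is the largest integer $m$ such that for all $x$, if $h(T_x)\le m$ or $h(T'_x)\le m$ then $T_x=T'_x$. A strongly connected component (SCC) is trivial if it is a single vertex without a loop, nontrivial otherwise. A path $v_0\to\dots\to v_\ell$ is an outlet from a nontrivial SCC $K$ if $v_0\in K$ and $v_1,\dots,v_\ell$ lie in trivial SCCs. $O_G$ is the maximal length of an outlet ($\infty$ if unbounded, $-\infty$ if none). *)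

(* Defs.v *)
From mathcomp Require Import all_boot all_order all_algebra.
From Stdlib Require Import ClassicalEpsilon Relations.
Set Implicit Arguments. Unset Strict Implicit. Unset Printing Implicit Defensive.
Import Order.TTheory GRing.Theory Num.Theory.

Inductive term : Type := Var of nat | Mul of term & term.

Fixpoint vars (t : term) : seq nat :=
  match t with Var i => [:: i] | Mul a b => vars a ++ vars b end.

Definition inB (n : nat) (t : term) : Prop := vars t = iota 1 n.

Fixpoint leftmost (t : term) : nat :=
  match t with Var i => i | Mul a _ => leftmost a end.

(* edge relation of the rooted tree G(t) (vertices = variable indices) *)
Fixpoint tedge (t : term) (x y : nat) : bool :=
  match t with
  | Var _ => false
  | Mul a b => [|| tedge a x y, tedge b x y | (x == leftmost a) && (y == leftmost b)]
  end.

Inductive walk (e : rel nat) : nat -> nat -> nat -> Prop :=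
  | walk0 x : walk e x x 0
  | walkS x y z k : e x y -> walk e y z k -> walk e x z k.+1.

(* y is a descendant of x (or x itself) in G(t), i.e. a vertex of G(t)_x *)
Definition desc (t : term) (x y : nat) : Prop := exists k, walk (tedge t) x y k.

Definition height_le (t : term) (x : nat) (m : int) : Prop :=
  forall y k, walk (tedge t) x y k -> (k%:Z <= m)%R.

(* G(t)_x = G(t')_x as rooted (induced) subtrees with root x *)
Definition subtree_eq (t t' : term) (x : nat) : Prop :=
  (forall y, desc t x y <-> desc t' x y) /\
  (forall y z, desc t x y -> desc t x z -> tedge t y z = tedge t' y z).

(* the defining property of m in the definition of Y_{t,t'} *)
Definition Ycond (t t' : term) (m : int) : Prop :=
  forall x, x \in vars t ->
    (height_le t x m \/ height_le t' x m) -> subtree_eq t t' x.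

Definition isY (t t' : term) (Y : int) : Prop :=
  Ycond t t' Y /\ forall m, Ycond t t' m -> (m <= Y)%R.

(* carrier option V, with None playing the role of infinity *)
Definition gop (V : Type) (E : V -> V -> Prop) (a b : option V) : option V :=
  match a, b with
  | Some x, Some y => if excluded_middle_informative (E x y) then Some x else None
  | _, _ => None
  end.

Fixpoint eval (V : Type) (E : V -> V -> Prop) (env : nat -> option V) (t : term)
  : option V :=
  match t with
  | Var i => env i
  | Mul a b => gop E (eval E env a) (eval E env b)
  end.

Definition satisfies (V : Type) (E : V -> V -> Prop) (t t' : term) : Prop :=
  forall env : nat -> option V, eval E env t = eval E env t'.

Definition reach (V : Type) (E : V -> V -> Prop) : V -> V -> Prop :=
  clos_refl_trans V E.

Definition trivial_scc (V : Type) (E : V -> V -> Prop) (v : V) : Prop :=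
  (forall u, reach E v u -> reach E u v -> u = v) /\ ~ E v v.

Fixpoint is_path (V : Type) (E : V -> V -> Prop) (x : V) (s : seq V) : Prop :=
  match s with
  | [::] => True
  | y :: s' => E x y /\ is_path E y s'
  end.

(* v0 -> v1 -> ... -> vl (with s = [:: v1; ...; vl]) is an outlet from the
   nontrivial SCC of v0; its length is size s *)
Definition outlet (V : Type) (E : V -> V -> Prop) (v0 : V) (s : seq V) : Prop :=
  ~ trivial_scc E v0 /\ is_path E v0 s /\ List.Forall (trivial_scc E) s.

(* Main.v *)
Require Import Defs.
From mathcomp Require Import all_boot all_order all_algebra.
From mathcomp Require Import zify.
From Stdlib Require Import ClassicalEpsilon Relations Classical.
Import Order.TTheory GRing.Theory Num.Theory.
Set Implicit Arguments. Unset Strict Implicit.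

Lemma walk_snoc (e : rel nat) a b c k : walk e a b k -> e b c -> walk e a c k.+1.
Proof.
elim=> [x|x y z k' Hxy _ IH] Hbc.
  exact: (walkS Hbc (walk0 _ _)).
exact: (walkS Hxy (IH Hbc)).
Qed.

Lemma walk0_eq (e : rel nat) a b : walk e a b 0 -> a = b.
Proof. by move=> W; inversion W. Qed.

Lemma walk_last (e : rel nat) a b k : walk e a b k.+1 -> exists z, walk e a z k /\ e z b.
Proof.
elim: k a => [|k IH] a W; inversion W; subst.
  have := walk0_eq H3 => <-. exists a; split=> //; constructor.
have [z [Wz Hz]] := IH _ H3.
exists z; split=> //. exact: (walkS H0 Wz).
Qed.

Lemma desc_refl t x : desc t x x.
Proof. by exists 0; constructor. Qed.

Lemma desc_step t a b c : desc t a b -> tedge t b c -> desc t a c.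
Proof. by move=> [k W] H; exists k.+1; apply: walk_snoc W H. Qed.

Lemma desc_cons t a b c : tedge t a b -> desc t b c -> desc t a c.
Proof. by move=> H [k W]; exists k.+1; apply: (walkS H W). Qed.

Lemma desc_first t a b : desc t a b -> a = b \/ exists c, tedge t a c /\ desc t c b.
Proof.
move=> [k W]; inversion W; subst; first by left.
right; exists y; split=> //; by exists k0.
Qed.

Lemma leftmost_in t : leftmost t \in vars t.
Proof. elim: t => [i|a IHa b _] /=; [by rewrite inE | by rewrite mem_cat IHa]. Qed.

Lemma tedge_vars t a b : tedge t a b -> (a \in vars t) && (b \in vars t).
Proof.
elim: t => [i|t1 IH1 t2 IH2] //=.
case/or3P=> [/IH1/andP[H1 H2]|/IH2/andP[H1 H2]|/andP[/eqP-> /eqP->]];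
  by rewrite !mem_cat ?H1 ?H2 ?orbT ?leftmost_in ?orbT.
Qed.

Lemma uniq_split t1 t2 : uniq (vars (Mul t1 t2)) ->
  [/\ uniq (vars t1), uniq (vars t2) & forall w, w \in vars t2 -> w \notin vars t1].
Proof.
rewrite /= cat_uniq => /and3P[u1 /hasPn D u2]; split=> // w /D //.
Qed.

Fixpoint lev (t : term) (w : nat) : nat :=
  match t with Var _ => 0 | Mul a b => if w \in vars b then (lev b w).+1 else lev a w end.

Lemma lev_leftmost t : uniq (vars t) -> lev t (leftmost t) = 0.
Proof.
elim: t => [i|t1 IH1 t2 IH2] //= /uniq_split[u1 u2 D].
have -> : (leftmost t1 \in vars t2) = false.
  by apply/negP => /D; rewrite leftmost_in.
exact: IH1.
Qed.

Lemma lev_edge t a b : uniq (vars t) -> tedge t a b -> lev t b = (lev t a).+1.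
Proof.
elim: t a b => [i|t1 IH1 t2 IH2] a b //= /uniq_split[u1 u2 D].
case/or3P=> [He|He|/andP[/eqP-> /eqP->]].
- have /andP[Ha Hb] := tedge_vars He.
  have -> : (a \in vars t2) = false by apply/negP => /D; rewrite Ha.
  have -> : (b \in vars t2) = false by apply/negP => /D; rewrite Hb.
  exact: IH1.
- have /andP[Ha Hb] := tedge_vars He. rewrite Ha Hb. by rewrite (IH2 _ _ u2 He).
- rewrite leftmost_in (lev_leftmost u2).
  have -> : (leftmost t1 \in vars t2) = false by apply/negP => /D; rewrite leftmost_in.
  by rewrite (lev_leftmost u1).
Qed.

Lemma lev_walk t a b k : uniq (vars t) -> walk (tedge t) a b k -> lev t b = lev t a + k.
Proof.
move=> U; elim=> [x|x y z k' Hxy _ IH]; first by rewrite addn0.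
rewrite IH (lev_edge U Hxy); lia.
Qed.

Lemma desc_lev t a b : uniq (vars t) -> desc t a b -> lev t a <= lev t b.
Proof. move=> U [k W]; rewrite (lev_walk U W); lia. Qed.

Lemma parent_uniq t a a' b : uniq (vars t) -> tedge t a b -> tedge t a' b -> a = a'.
Proof.
elim: t a a' b => [i|t1 IH1 t2 IH2] a a' b //= /uniq_split[u1 u2 D].
have NB : forall w, w \in vars t1 -> w \in vars t2 -> False.
  by move=> w h1 /D; rewrite h1.
have NL : forall w, tedge t2 w (leftmost t2) -> False.
  by move=> w /(lev_edge u2); rewrite (lev_leftmost u2).
case/or3P=> [He|He|/andP[/eqP Ea /eqP Eb]]; case/or3P=> [He'|He'|/andP[/eqP Ea' /eqP Eb']].
- exact: IH1 u1 He He'.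
- case/andP: (tedge_vars He) => _ h1; case/andP: (tedge_vars He') => _ h2; by case: (NB _ h1 h2).
- case/andP: (tedge_vars He) => _ h1; by case: (NB b h1); rewrite Eb' leftmost_in.
- case/andP: (tedge_vars He) => _ h1; case/andP: (tedge_vars He') => _ h2; by case: (NB _ h2 h1).
- exact: IH2 u2 He He'.
- by subst b; case: (NL _ He).
- case/andP: (tedge_vars He') => _ h1; by case: (NB b h1); rewrite Eb leftmost_in.
- by subst b; case: (NL _ He').
- by rewrite Ea Ea'.
Qed.

Definition homT V (E : V -> V -> Prop) t (f : nat -> V) :=
  forall a b, tedge t a b -> E (f a) (f b).

Lemma hom_eval V (E : V -> V -> Prop) t (f : nat -> V) :
  homT E t f -> eval E (fun i => Some (f i)) t = Some (f (leftmost t)).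
Proof.
elim: t => [i|t1 IH1 t2 IH2] //= H.
have H1 : homT E t1 f by move=> a b He; apply: H; rewrite /= He.
have H2 : homT E t2 f by move=> a b He; apply: H; rewrite /= He orbT.
rewrite (IH1 H1) (IH2 H2) /=.
case: excluded_middle_informative => // nE; exfalso; apply: nE; apply: H.
by rewrite /= !eqxx !orbT.
Qed.

Lemma eval_hom V (E : V -> V -> Prop) t (f : nat -> V) :
  eval E (fun i => Some (f i)) t <> None ->
  eval E (fun i => Some (f i)) t = Some (f (leftmost t)) /\ homT E t f.
Proof.
elim: t => [i|t1 IH1 t2 IH2] /=.
  by move=> _; split => // a b.
move=> H.
have N1 : eval E (fun i => Some (f i)) t1 <> None by move=> N; apply: H; rewrite N.
have N2 : eval E (fun i => Some (f i)) t2 <> None.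
  by move=> N; apply: H; rewrite N; case: (eval _ _ t1).
have [e1 h1] := IH1 N1; have [e2 h2] := IH2 N2.
rewrite e1 e2 in H *; rewrite /=.
move: H; rewrite /=; case: excluded_middle_informative => // He _.
split=> // a b /or3P [/h1|/h2|/andP[/eqP-> /eqP->]] //.
Qed.

Lemma hom_transfer V (E : V -> V -> Prop) t t' (f : nat -> V) :
  satisfies E t t' -> homT E t f -> homT E t' f.
Proof.
move=> S H. have := hom_eval H. rewrite S => e.
have [] := @eval_hom V E t' f; [by rewrite e | done].
Qed.

Lemma rt1n_fun V (E : V -> V -> Prop) a b : clos_refl_trans_1n V E a b ->
  exists k (c : nat -> V), c 0 = a /\ c k = b /\ forall i, i < k -> E (c i) (c i.+1).
Proof.
induction 1 as [x|x y z Hxy _ [k [c [c0 [ck Hc]]]]].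
  by exists 0, (fun _ => x).
exists k.+1, (fun i => if i is i'.+1 then c i' else x); split=> //; split=> //.
case=> [|i] /= Hi; first by rewrite c0.
exact: Hc.
Qed.

Lemma closed_walk V (E : V -> V -> Prop) v0 w : E v0 w -> clos_refl_trans V E w v0 ->
  exists L (c : nat -> V), 0 < L /\ c 0 = v0 /\ c L = v0 /\ forall i, i < L -> E (c i) (c i.+1).
Proof.
move=> H R; have [k [c [c0 [ck Hc]]]] := rt1n_fun (clos_rt_rt1n _ _ _ _ R).
exists k.+1, (fun i => if i is i'.+1 then c i' else v0); do !split => //.
case=> [|i] /= Hi; [by rewrite c0 | exact: Hc].
Qed.

Lemma cycle_of V (E : V -> V -> Prop) v0 : ~ trivial_scc E v0 ->
  exists (cyc : nat -> V) L, (forall j, E (cyc j) (cyc j.+1)) /\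
    (forall q, cyc (L.+1 * q) = v0) /\ (forall j, reach E (cyc j) v0).
Proof.
move=> NT.
have [w [Hw Rw]] : exists w, E v0 w /\ reach E w v0.
  apply: NNPP => Hno; apply: NT; split.
  - move=> u R1 R2. apply: NNPP => Hu.
    have H1n := clos_rt_rt1n _ _ _ _ R1; clear R1; move: Hu R2; case: H1n => [|y z Hy Ryz] Hu R2; first by apply Hu.
    apply: Hno; exists y; split=> //. exact: (rt_trans _ _ _ _ _ (clos_rt1n_rt _ _ _ _ Ryz) R2).
  - move=> L; apply: Hno; exists v0; split=> //; exact: rt_refl.
have [L [c [L0 [c0 [cL Hc]]]]] := closed_walk Hw Rw.
case: L L0 cL Hc => [|L] // _ cL Hc.
exists (fun j => c (j %% L.+1)), L; split; [|split].
- move=> j.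
  have -> : j.+1 %% L.+1 = (j %% L.+1).+1 %% L.+1 by rewrite -(addn1 j) -modnDml addn1.
  move: (j %% L.+1) (ltn_pmod j (ltn0Sn L)) => i Hi.
  case: (ltnP i.+1 L.+1) => H.
    rewrite modn_small //; exact: Hc.
  have Hi1 : i.+1 = L.+1 by apply/eqP; rewrite eqn_leq H Hi.
  rewrite Hi1 modnn c0 -cL -Hi1; apply: Hc; by rewrite Hi1.
- by move=> q; rewrite modnMr.
- move=> j.
  have R : forall d i, i + d = L.+1 -> reach E (c i) (c L.+1).
    elim=> [|d IH] i Hid.
      rewrite addn0 in Hid; rewrite Hid; exact: rt_refl.
    apply: (rt_trans _ _ _ (c i.+1)); last by apply: IH; lia.
    apply: rt_step; apply: Hc; lia.
  rewrite -cL; apply: (R (L.+1 - j %% L.+1)).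
  have := ltn_pmod j (ltn0Sn L); lia.
Qed.

Lemma path_nth V (E : V -> V -> Prop) d x s : is_path E x s ->
  forall i, i < size s -> E (nth d (x :: s) i) (nth d (x :: s) i.+1).
Proof.
elim: s x => [|y s IH] x //= [Hxy Hp] [|i] Hi //=.
exact: IH.
Qed.

Lemma first_triv V (E : V -> V -> Prop) (v0 : V) s : 0 < size s ->
  List.Forall (trivial_scc E) s -> trivial_scc E (nth v0 (v0 :: s) 1).
Proof. case: s => [|y s] //= _ H. by inversion H. Qed.

Lemma certify (t t' : term) V (E : V -> V -> Prop) (x m : nat) (v0 : V) (s : seq V) :
  uniq (vars t) ->
  (forall f, homT E t f -> homT E t' f) ->
  height_le t x m%:Z -> outlet E v0 s -> m < size s ->
  forall y, tedge t' x y -> desc t x y.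
Proof.
move=> U Htr Hh [NT [Hp Htriv]] Hm y Hxy.
apply: NNPP => Hy.
have T1 : trivial_scc E (nth v0 (v0 :: s) 1) by apply: first_triv => //; lia.
have [cyc [L [Hcyc [Hper Hreach]]]] := cycle_of NT.
have Hvp : forall i, i < size s -> E (nth v0 (v0 :: s) i) (nth v0 (v0 :: s) i.+1).
  exact: path_nth.
have Hle : forall z k, walk (tedge t) x z k -> k <= m.
  by move=> z k W; have := Hh z k W; rewrite lez_nat.
pose f w := if excluded_middle_informative (desc t x w)
            then nth v0 (v0 :: s) (1 + lev t w - lev t x)
            else cyc (lev t w + (L * lev t x).+1).
have Hf : homT E t f.
  move=> a b Hab. have Elev := lev_edge U Hab.
  rewrite /f /=. case: (excluded_middle_informative (desc t x a)) => Da /=.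
  - have Db : desc t x b by apply: desc_step Da Hab.
    case: (excluded_middle_informative (desc t x b)) => //= _.
    case: Da => k Wk. have Ea := lev_walk U Wk.
    have Hk := Hle b k.+1 (walk_snoc Wk Hab).
    rewrite Elev Ea.
    have -> : 1 + (lev t x + k) - lev t x = k.+1 by lia.
    have -> : 1 + (lev t x + k).+1 - lev t x = k.+2 by lia.
    apply: Hvp; lia.
  - case: (excluded_middle_informative (desc t x b)) => Db /=.
    + have Ebx : b = x.
        case: Db => [[|k] W]; first by rewrite (walk0_eq W).
        have [z [Wz Hz]] := walk_last W.
        have Eza := parent_uniq U Hz Hab. subst z.
        by case: Da; exists k.
      subst b.
      have -> : lev t a + (L * lev t x).+1 = L.+1 * lev t x.
        rewrite Elev mulSn; lia.
      rewrite Hper.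
      have -> : 1 + lev t x - lev t x = 1 by lia.
      exact: (Hvp 0 (leq_ltn_trans (leq0n m) Hm)).
    + rewrite Elev. exact: Hcyc.
have := Htr f Hf x y Hxy.
rewrite /f /=; case: (excluded_middle_informative (desc t x x)) => [_|] /=; last by case; apply: desc_refl.
case: (excluded_middle_informative (desc t x y)) => //= _.
have -> : 1 + lev t x - lev t x = 1 by lia.
set j := (lev t y + _).
move=> He.
have E01 : E v0 (nth v0 (v0 :: s) 1) := Hvp 0 (leq_ltn_trans (leq0n m) Hm).
case: T1 => Tu Tl.
have Eq1 : cyc j = nth v0 (v0 :: s) 1.
  apply: Tu; first exact: rt_step.
  exact: (rt_trans _ _ _ _ _ (Hreach j) (rt_step _ _ _ _ E01)).
have Eq0 : v0 = nth v0 (v0 :: s) 1.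
  apply: Tu; last exact: rt_step.
  rewrite -Eq1; exact: Hreach.
apply: NT. rewrite {1}Eq0. by split.
Qed.

Lemma walk_transfer t t' y z k : subtree_eq t t' y ->
  walk (tedge t') y z k -> walk (tedge t) y z k.
Proof.
move=> [D Ed] W.
suff : forall a, desc t' y a -> walk (tedge t') a z k -> walk (tedge t) a z k.
  by move=> H; apply: H W; exact: desc_refl.
move=> a Da {}W. elim: W Da => [a'|a' b z' k' Hab Wb IH] Da; first by constructor.
have Db : desc t' y b by apply: desc_step Da Hab.
apply: walkS (IH Db). rewrite Ed //; by apply/D.
Qed.

Lemma core (t t' : term) V (E : V -> V -> Prop) (x m : nat) (Y : int) (v0 : V) (s : seq V) :
  uniq (vars t) -> uniq (vars t') ->
  (forall f, homT E t f -> homT E t' f) -> (forall f, homT E t' f -> homT E t f) ->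
  Ycond t t' Y -> (Y + 1 = m%:Z)%R ->
  height_le t x m%:Z -> ~ subtree_eq t t' x ->
  outlet E v0 s -> m < size s -> False.
Proof.
move=> U U' H12 H21 HY Hm Hh Hns Hout Hms.
have Hle : forall z k, walk (tedge t) x z k -> k <= m.
  by move=> z k W; have := Hh z k W; rewrite lez_nat.
have Hch : forall c, tedge t x c -> subtree_eq t t' c.
  move=> c Hc; apply: HY.
  - by case/andP: (tedge_vars Hc).
  - left=> z k W. have := Hle z k.+1 (walkS Hc W). lia.
have notA := certify U H12 Hh Hout Hms.
have Hc1 : forall y, tedge t' x y -> tedge t x y.
  move=> y Hy. have Ly := lev_edge U' Hy.
  case: (desc_first (notA y Hy)) => [Exy|[c [Hc Dc]]].
    by move: Ly; rewrite Exy; lia.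
  have [D1 _] := Hch c Hc.
  have [[|k] W] := proj1 (D1 y) Dc.
    by rewrite -(walk0_eq W).
  have [z [Wz Hz]] := walk_last W.
  have Ez := parent_uniq U' Hz Hy. subst z.
  have Dcx : desc t c x by apply/D1; exists k.
  have := desc_lev U Dcx; have := lev_edge U Hc; lia.
have Hh' : height_le t' x m%:Z.
  move=> z k W. rewrite lez_nat.
  case: k W => [|k] W //.
  inversion W; subst.
  have Hy := Hc1 _ H0.
  have W' := walk_transfer (Hch _ Hy) H3.
  exact: Hle z k.+1 (walkS Hy W').
have notB := certify U' H21 Hh' Hout Hms.
have Hc2 : forall c, tedge t x c -> tedge t' x c.
  move=> c Hc. have Lc := lev_edge U Hc.
  case: (desc_first (notB c Hc)) => [Exc|[y [Hy Dy]]].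
    by move: Lc; rewrite Exc; lia.
  have Hyt := Hc1 y Hy.
  have [D1 _] := Hch y Hyt.
  have [[|k] W] := proj2 (D1 c) Dy.
    by rewrite -(walk0_eq W).
  have [z [Wz Hz]] := walk_last W.
  have Ez := parent_uniq U Hz Hc. subst z.
  have Dyx : desc t y x by exists k.
  have := desc_lev U Dyx; have := lev_edge U Hyt; lia.
apply: Hns; split.
- move=> z; split.
  + case/desc_first => [<-|[c [Hc Dc]]]; first exact: desc_refl.
    apply: (desc_cons (Hc2 c Hc)). by apply/(proj1 (Hch c Hc)).
  + case/desc_first => [<-|[c [Hc Dc]]]; first exact: desc_refl.
    have Hct := Hc1 c Hc. apply: (desc_cons Hct). by apply/(proj1 (Hch c Hct)).
- move=> y z Dy _.
  case: (desc_first Dy) => [<-|[c [Hc Dc]]].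
    by apply/idP/idP => [/Hc2|/Hc1].
  have [D1 Ed] := Hch c Hc.
  case: (classic (desc t c z)) => Dz; first exact: Ed.
  apply/idP/idP => He; exfalso; apply: Dz.
    exact: desc_step Dc He.
  apply/D1. apply: desc_step He. by apply/D1.
Qed.

Lemma subtree_eq_sym t t' x : subtree_eq t t' x -> subtree_eq t' t x.
Proof.
move=> [D Ed]; split=> [y|y z Dy Dz]; first by split; move/D.
by rewrite Ed //; apply/D.
Qed.

Lemma Ycond_sym t t' Y : vars t' = vars t -> Ycond t t' Y -> Ycond t' t Y.
Proof.
move=> Ev HY x Hx Hh; apply: subtree_eq_sym; apply: HY.
  by rewrite -Ev.
by case: Hh; [right|left].
Qed.

Unset Implicit Arguments.

Theorem lemma6p10 (n : nat) (t t' : term) (V : Type) (E : V -> V -> Prop) :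
  inB n t -> inB n t' -> t <> t' -> satisfies E t t' ->
  forall Y : int, isY t t' Y ->
  forall (v0 : V) (s : seq V), outlet E v0 s -> ((size s)%:Z <= Y + 1)%R.
Proof.
move=> Bt Bt' _ Hsat Y [HY Hmax] v0 s Hout.
have Ut : uniq (vars t) by rewrite Bt iota_uniq.
have Ut' : uniq (vars t') by rewrite Bt' iota_uniq.
have Vt : vars t' = vars t by rewrite Bt Bt'.
have NY : ~ Ycond t t' (Y + 1).
  move=> /Hmax H; lia.
have [x [Hx [Hh Hns]]] : exists x, x \in vars t /\
    (height_le t x (Y + 1) \/ height_le t' x (Y + 1)) /\ ~ subtree_eq t t' x.
  apply: NNPP => H; apply: NY => x Hx Hh; apply: NNPP => Hn; apply: H; by exists x.
have H0 : (0 <= Y + 1)%R.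
  by case: Hh => Hh; apply: (Hh x 0); constructor.
have [m Hm] : exists m : nat, (Y + 1 = m%:Z)%R.
  by move: H0; case: (Y + 1)%R => [m|m] //= _; exists m.
rewrite Hm lez_nat leqNgt; apply/negP => Hlt.
have H12 : forall f, homT E t f -> homT E t' f := fun f => @hom_transfer V E t t' f Hsat.
have Hsat' : satisfies E t' t by move=> env; rewrite Hsat.
have H21 : forall f, homT E t' f -> homT E t f := fun f => @hom_transfer V E t' t f Hsat'.
case: Hh => Hh; rewrite Hm in Hh.
- exact: (core Ut Ut' H12 H21 HY Hm Hh Hns Hout Hlt).
- apply: (core Ut' Ut H21 H12 (Ycond_sym Vt HY) Hm Hh _ Hout Hlt).
  by move/subtree_eq_sym.
Qed.
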